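(* For every integer $n\ge 1$, \[ \sum_{k=0}^{n}\Big(-\frac{1}{4}\Big)^k\binom{n}{k}\binom{2k}{k}\,k^2H_{2k} =\frac{n^2}{4^n(2n-1)(2n-3)}\binom{2n}{n}\Big\{\frac{3}{2}H_n-2H_{2n}+\frac{8n^3-4n^2-10n+3}{n(2n-1)(2n-3)}\Big\}. \]
   Context: For an integer $m\ge 0$, $H_m$ denotes the $m$-th harmonic number: $H_0=0$ and $H_m=\sum_{j=1}^m \frac1j$ for $m\ge1$. $\binom{n}{k}$ is the usual binomial coefficient. *)

(* Defs.v *)
From HB Require Import structures.
From mathcomp Require Import all_boot all_order all_algebra.
Set Implicit Arguments. Unset Strict Implicit. Unset Printing Implicit Defensive.
Import Order.TTheory GRing.Theory Num.Theory.
Local Open Scope ring_scope.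

Definition harm (m : nat) : rat := \sum_(1 <= j < m.+1) (j%:R)^-1.

(* Main.v *)
Require Import Defs.
From HB Require Import structures.
From mathcomp Require Import all_boot all_order all_algebra.
From mathcomp Require Import ring lra zify.
Import Order.TTheory GRing.Theory Num.Theory.
Local Open Scope ring_scope.
Definition tt (m k : nat) : rat :=
  (- (1 / 4 : rat)) ^+ k * ('C(m, k))%:R * ('C(2 * k, k))%:R.

Lemma tt_small m k : (m < k)%N -> tt m k = 0.
Proof. by move=> h; rewrite /tt bin_small // mulr0 mul0r. Qed.

Lemma R1 n k : (k <= n.+1)%N ->
  tt n k * (n%:R + 1) = tt n.+1 k * (n%:R + 1 - k%:R).
Proof.
move=> hk.
have h : ('C(n, k) * n.+1)%:R = ('C(n.+1, k) * (n.+1 - k))%:R :> rat.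
  by rewrite mulnC -[n.+1 in LHS]/(n.+1.-1.+1) mul_bin_down mulnC.
rewrite !natrM natrB // -natr1 in h.
have -> : tt n k * (n%:R + 1) = (- (1 / 4 : rat)) ^+ k * ('C(2 * k, k))%:R * ('C(n, k)%:R * (n%:R+1)) by rewrite /tt; ring.
by rewrite h /tt; ring.
Qed.

Lemma cent k : ('C(2 * k.+1, k.+1))%:R * (k%:R + 1) = 2 * (2 * k%:R + 1) * ('C(2 * k, k))%:R :> rat.
Proof.
have e : (2 * k.+1 = (2 * k).+2)%N by lia.
have h1 := mul_bin_diag (2 * k).+2 k.
have h2 := mul_bin_down (2 * k).+1 k.
rewrite /= in h1 h2.
have e2 : ((2 * k).+1 - k = k.+1)%N by lia.
rewrite e2 in h2.
have h : ('C(2 * k.+1, k.+1) * k.+1 = 2 * (2 * k).+1 * 'C(2 * k, k))%N.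
  rewrite e; nia.
have hh := congr1 (fun x : nat => x%:R : rat) h.
rewrite /= !natrM -!natr1 in hh.
rewrite -natr1 hh; ring.
Qed.

Lemma R2 n k : (k <= n.+1)%N ->
  tt n.+1 k.+1 * (k%:R + 1) ^+ 2 * 2 =
  - tt n.+1 k * (n%:R + 1 - k%:R) * (2 * k%:R + 1).
Proof.
move=> hk.
have h : ('C(n.+1, k.+1) * k.+1)%:R = ('C(n.+1, k) * (n.+1 - k))%:R :> rat.
  by rewrite mulnC mul_bin_left mulnC.
rewrite !natrM natrB // -!natr1 in h.
have hc := cent k.
have -> : tt n.+1 k.+1 * (k%:R + 1) ^+ 2 * 2 =
   (- (1 / 4 : rat)) ^+ k.+1 * 2 * (('C(n.+1, k.+1))%:R * (k%:R + 1)) * (('C(2 * k.+1, k.+1))%:R * (k%:R + 1)) by rewrite /tt; ring.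
rewrite h hc /tt exprS; by field.
Qed.

Definition X m k := tt m k * (k%:R * (k%:R - 1) ^+ 2 * (4 * k%:R - 1) / (2 * k%:R - 1)).
Definition V m := \sum_(0 <= k < m.+1) X m k.
Definition S n := \sum_(0 <= k < n.+1) tt n k * (k%:R) ^+ 2 * harm (2 * k).

Lemma harmS m : harm m.+1 = harm m + (m%:R + 1)^-1.
Proof. by rewrite /harm big_nat_recr //= natr1. Qed.

Lemma abel (G h : nat -> rat) N :
  \sum_(0 <= k < N) (G k.+1 - G k) * h k =
  G N * h N - G 0%N * h 0%N - \sum_(0 <= k < N) G k.+1 * (h k.+1 - h k).
Proof.
elim: N => [|N IH]; first by rewrite !big_geq //; ring.
rewrite !big_nat_recr //= IH; ring.
Qed.

Lemma tele (G : nat -> rat) N :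
  \sum_(0 <= k < N) (G k.+1 - G k) = G N - G 0%N.
Proof.
elim: N => [|N IH]; first by rewrite !big_geq //; ring.
rewrite !big_nat_recr //= IH; ring.
Qed.

Ltac nz := repeat (apply/andP; split); apply: lt0r_neq0; lra.

Lemma nat_ge0 (k : nat) : (0 : rat) <= k%:R.
Proof. exact: ler0n. Qed.

Lemma Srec n : 2 * n%:R ^+ 2 * S n.+1 - (n%:R + 1) * (2 * n%:R - 3) * S n = V n.+1.
Proof.
have eS : S n = \sum_(0 <= k < n.+2) tt n k * (k%:R) ^+ 2 * harm (2 * k).
  by rewrite /S [in RHS]big_nat_recr //= tt_small // !mul0r addr0.
rewrite eS /S !mulr_sumr -sumrB.
pose G k := -2 * (k%:R) ^+ 2 * (k%:R - 1) ^+ 2 * tt n.+1 k.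
transitivity (\sum_(0 <= k < n.+2) (G k.+1 - G k) * harm (2 * k)).
  apply: eq_big_nat => k /andP[_ hk].
  have hk' : (k <= n.+1)%N by [].
  have hn0 := nat_ge0 n; have hk0 := nat_ge0 k.
  have e1 : tt n k = tt n.+1 k * (n%:R + 1 - k%:R) / (n%:R + 1).
    rewrite -R1 //; field; lra.
  have e2 : tt n.+1 k.+1 = - tt n.+1 k * (n%:R + 1 - k%:R) * (2 * k%:R + 1) / ((k%:R + 1) ^+ 2 * 2).
    rewrite -R2 //; field; lra.
  rewrite /G e1 e2 -!natr1; field.
  by apply/andP; split; apply: lt0r_neq0; lra.
rewrite abel /G tt_small //.
rewrite [X in X - _ = _](_ : _ = 0); last by ring.
rewrite sub0r.
rewrite /V [in RHS]big_nat_recl // [Z in Z + _ ](_ : _ = 0); last by rewrite /X; ring.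
rewrite add0r -sumrN [in LHS]big_nat_recr //= tt_small //.
rewrite [Z in _ + Z = _](_ : _ = 0); last by ring.
rewrite addr0.
apply: eq_big_nat => k _.
have e : (2 * k.+1 = (2 * k).+1.+1)%N by lia.
have hk0 := nat_ge0 k.
rewrite /X e !harmS -[(k.+1)%:R]natr1 -[((2*k).+1)%:R]natr1 natrM.
field; nz.
Qed.

Lemma odd_nz (k j : nat) : (2 * k%:R - (2 * j + 1)%:R : rat) != 0.
Proof.
rewrite subr_eq0; apply/negP => /eqP h.
have : ((2 * k)%:R = (2 * j + 1)%:R :> rat) by rewrite natrM h.
move/eqP; rewrite eqr_nat; lia.
Qed.

Lemma nz1 (k : nat) : (2 * k%:R - 1 : rat) != 0.
Proof. exact: (odd_nz k 0). Qed.
Lemma nz3 (k : nat) : (2 * k%:R - 3 : rat) != 0.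
Proof. exact: (odd_nz k 1). Qed.
Lemma nz5 (k : nat) : (2 * k%:R - 5 : rat) != 0.
Proof. exact: (odd_nz k 2). Qed.

Lemma oddq (d j : nat) (e : rat) : e = 2 * d%:R - (2 * j + 1)%:R -> e != 0.
Proof. by move=> ->; apply: odd_nz. Qed.

Ltac oddt d := first [apply: (oddq d 0); ring | apply: (oddq d 1); ring | apply: (oddq d 2); ring | apply: (oddq d 3); ring].

Ltac nz2 := repeat (apply/andP; split); first [apply: nz1 | apply: nz3 | apply: nz5 | apply: lt0r_neq0; lra].

Definition P2 (m k : nat) : rat :=
  let x := m%:R in let y := k%:R in
  (8 - 152 * x - 80 * x ^+ 2) * y ^+ 2 + (-116 + 648 * x + 224 * x ^+ 2) * y ^+ 3
  + (256 - 882 * x - 228 * x ^+ 2) * y ^+ 4 + (-196 + 474 * x + 100 * x ^+ 2) * y ^+ 5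
  + (48 - 88 * x - 16 * x ^+ 2) * y ^+ 6.

Lemma Vrec m :
  2 * (m%:R - 1) * (m%:R + 5) * (2 * m%:R - 3) * V m.+1
  - (m%:R + 6) * (2 * m%:R - 1) * (2 * m%:R - 5) * V m = 0.
Proof.
have eV : V m = \sum_(0 <= k < m.+2) X m k.
  by rewrite /V [in RHS]big_nat_recr //= /X tt_small // !mul0r addr0.
rewrite eV /V !mulr_sumr -sumrB.
pose G k := tt m.+1 k * P2 m k / ((2 * k%:R - 1) * (m%:R + 1)).
transitivity (\sum_(0 <= k < m.+2) (G k.+1 - G k)).
  apply: eq_big_nat => k /andP[_ hk].
  have hk' : (k <= m.+1)%N by [].
  have hn0 := nat_ge0 m; have hk0 := nat_ge0 k.
  have e1 : tt m k = tt m.+1 k * (m%:R + 1 - k%:R) / (m%:R + 1).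
    rewrite -R1 //; field; lra.
  have e2 : tt m.+1 k.+1 = - tt m.+1 k * (m%:R + 1 - k%:R) * (2 * k%:R + 1) / ((k%:R + 1) ^+ 2 * 2).
    rewrite -R2 //; field; lra.
  rewrite /G /X /P2 e1 e2 -[(k.+1)%:R]natr1.
  have h1 := nz1 k.
  field; nz2.
rewrite tele /G tt_small // /P2.
have hm := nat_ge0 m.
field; nz2.
Qed.

Definition u (m : nat) : rat := ('C(2 * m, m))%:R / 4 ^+ m.

Lemma harm0 : harm 0 = 0.
Proof. by rewrite /harm big_geq. Qed.

Lemma V2 : V 2 = - (2 * 1 * 7) / (3 * (-1)) * u 2.
Proof.
rewrite /V /u !big_nat_recr //= big_geq // /X /tt.
Qed.

Lemma Vclosed d :
  V d.+2 = - ((d.+2)%:R * ((d.+2)%:R - 1) * ((d.+2)%:R + 5))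
           / ((2 * (d.+2)%:R - 1) * (2 * (d.+2)%:R - 5)) * u d.+2.
Proof.
elim: d => [|d IH].
  rewrite V2; congr (_ * _); field.
have r := Vrec d.+2.
move/eqP: r; rewrite subr_eq0 => /eqP r.
set x := (d.+2)%:R in IH r.
have hx : (2 : rat) <= x by rewrite /x ler_nat.
have hc : 2 * (x - 1) * (x + 5) * (2 * x - 3) != 0.
  rewrite !mulf_eq0 !negb_or; repeat (apply/andP; split);
  first [done | exact: nz3 | apply: lt0r_neq0; lra].
have -> : V d.+3 = 2 * (x - 1) * (x + 5) * (2 * x - 3) * V d.+3 / (2 * (x - 1) * (x + 5) * (2 * x - 3)).
  by rewrite mulrAC divff // mul1r.
rewrite r IH /u.
have cu := cent d.+2.
rewrite -/x in cu.
have ec : ('C(2 * d.+3, d.+3))%:R = 2 * (2 * x + 1) * ('C(2 * d.+2, d.+2))%:R / (x + 1).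
  rewrite -cu; field; apply: lt0r_neq0; lra.
rewrite ec [4 ^+ d.+3]exprS -[(d.+3)%:R]natr1 -/x.
have hd := nat_ge0 d.
field; repeat (apply/andP; split);
  [by rewrite expf_neq0 | | | | | | apply: (oddq d 0); ring | ];
  apply: lt0r_neq0; lra.
Qed.
Definition Rf (n : nat) : rat :=
  (n%:R ^+ 2 / (4 ^+ n * (2 * n%:R - 1) * (2 * n%:R - 3)))
      * ('C(2 * n, n))%:R
      * (3 / 2 * harm n - 2 * harm (2 * n)
         + (8 * n%:R ^+ 3 - 4 * n%:R ^+ 2 - 10 * n%:R + 3)
             / (n%:R * (2 * n%:R - 1) * (2 * n%:R - 3))).

Lemma S1 : S 1 = Rf 1.
Proof.
rewrite /S /Rf !big_nat_recr //= big_geq // /tt.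
have e2 : (2 * 1 = 2)%N by [].
rewrite e2 !harmS harm0.
by [].
Qed.

Lemma Sclosed d : S d.+1 = Rf d.+1.
Proof.
elim: d => [|d IH]; first exact: S1.
have r := Srec d.+1.
have hv := Vclosed d.
rewrite -[(d.+2)%:R]natr1 in hv.
set x := (d.+1)%:R in IH r hv.
have hx : (1 : rat) <= x by have := nat_ge0 d; rewrite /x -natr1; lra.
have r2 : 2 * x ^+ 2 * S d.+2 = V d.+2 + (x + 1) * (2 * x - 3) * S d.+1.
  by rewrite -r; ring.
have hc : 2 * x ^+ 2 != 0.
  by rewrite mulf_neq0 // expf_neq0 //; apply: lt0r_neq0; lra.
have -> : S d.+2 = 2 * x ^+ 2 * S d.+2 / (2 * x ^+ 2).
  by rewrite mulrAC divff // mul1r.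
rewrite r2 IH hv /u /Rf.
have cu := cent d.+1.
rewrite -/x in cu.
have ec : ('C(2 * d.+2, d.+2))%:R = 2 * (2 * x + 1) * ('C(2 * d.+1, d.+1))%:R / (x + 1).
  rewrite -cu; field; apply: lt0r_neq0; lra.
have e : (2 * d.+2 = (2 * d.+1).+2)%N by lia.
have hH1 : harm d.+2 = harm d.+1 + (x + 1)^-1 by rewrite harmS.
have hH2 : harm (2 * d.+2) = harm (2 * d.+1) + (2 * x + 1)^-1 + (2 * x + 1 + 1)^-1.
  by rewrite e (harmS (2 * d.+1).+1) (harmS (2 * d.+1)) -[(((2 * d.+1).+1)%:R)]natr1 natrM.
rewrite ec hH1 hH2 [4 ^+ d.+2]exprS -[(d.+2)%:R]natr1 -/x.
have hd := nat_ge0 d.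
field; repeat (apply/andP; split);
  [ | | | | by rewrite expf_neq0 | | apply: (oddq d 0); ring];
  apply: lt0r_neq0; lra.
Qed.

Theorem theorem9 (n : nat) (hn : (1 <= n)%N) :
  \sum_(0 <= k < n.+1)
     (- (1 / 4 : rat)) ^+ k * ('C(n, k))%:R * ('C(2 * k, k))%:R
       * (k%:R) ^+ 2 * harm (2 * k)
  = (n%:R ^+ 2 / (4 ^+ n * (2 * n%:R - 1) * (2 * n%:R - 3)))
      * ('C(2 * n, n))%:R
      * (3 / 2 * harm n - 2 * harm (2 * n)
         + (8 * n%:R ^+ 3 - 4 * n%:R ^+ 2 - 10 * n%:R + 3)
             / (n%:R * (2 * n%:R - 1) * (2 * n%:R - 3))).
Proof.
case: n hn => [//|d] _.
exact: (Sclosed d).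
Qed.
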